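(* Let $k$ be an algebraically closed field of characteristic $p > 0$ and let $n \geq 1$. There exists a one-to-one correspondence between the set $\coprod_{r \geq 0} \mathrm{Hom}_{\mathrm{gr}}((\mathbb{Z}/p\mathbb{Z})^r, \mathrm{GL}(n,k))$ of all group homomorphisms from $(\mathbb{Z}/p\mathbb{Z})^r$ to $\mathrm{GL}(n,k)$, where $r$ ranges over all non-negative integers (disjoint union over $r$), and the set $\mathrm{Mat}(n,k[T])^E \times \mathbb{Z}_{\geq 0}$.
   Context: A matrix $A(T) \in \mathrm{Mat}(n,k[T])$ is an exponential matrix if $A(T)A(T') = A(T+T')$ in $\mathrm{Mat}(n,k[T,T'])$ ($T,T'$ independent variables) and $A(0) = I_n$; $\mathrm{Mat}(n,k[T])^E$ denotes the set of all exponential matrices of $\mathrm{Mat}(n,k[T])$. *)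

(* Defs.v *)
From HB Require Import structures.
From mathcomp Require Import all_boot all_order all_algebra.
Set Implicit Arguments. Unset Strict Implicit. Unset Printing Implicit Defensive.
Import GRing.Theory.
Local Open Scope ring_scope.

Definition Zp_pow (p r : nat) := {ffun 'I_r -> 'Z_p}.

Definition is_hom_GL (k : fieldType) (n p r : nat)
  (f : {ffun Zp_pow p r -> 'M[k]_n}) : Prop :=
  (forall x, f x \in unitmx) /\ (forall x y, f (x + y) = f x *m f y).

(* k[T,T'] is {poly {poly k}}: T is the inner variable ('X%:P), T' the outer 'X. *)
Definition polyT (k : fieldType) (q : {poly k}) : {poly {poly k}} := q%:P.
Definition polyT' (k : fieldType) (q : {poly k}) : {poly {poly k}} := q^:P.
Definition polyTT' (k : fieldType) (q : {poly k}) : {poly {poly k}} :=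
  (q^:P) \Po ('X + ('X : {poly k})%:P).

Definition is_exponential (k : fieldType) (n : nat) (A : 'M[{poly k}]_n) : Prop :=
  map_mx (@polyT k) A *m map_mx (@polyT' k) A = map_mx (@polyTT' k) A /\
  map_mx (fun q : {poly k} => q.[0]) A = 1%:M.

(* Main.v *)
Require Import Defs.
From HB Require Import structures.
From mathcomp Require Import all_boot all_order all_algebra.
From mathcomp Require Import zify ring.
From Stdlib Require Import ProofIrrelevance.
Set Implicit Arguments. Unset Strict Implicit. Unset Printing Implicit Defensive.
Import GRing.Theory.
Local Open Scope ring_scope.


Section Lucas.
Variables (k : fieldType) (p : nat).
Hypothesis hchar : p \in [pchar k].

Lemma hp : prime p. Proof. by case/andP: hchar. Qed.
Lemma p_gt1 : (1 < p)%N. Proof. exact: prime_gt1 hp. Qed.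
Lemma p_gt0 : (0 < p)%N. Proof. exact: prime_gt0 hp. Qed.

Lemma coefXaddn (n i : nat) : (('X + 1)^+n : {poly k})`_i = 'C(n,i)%:R.
Proof.
rewrite exprD1n coef_sum.
under eq_bigr => j _ do rewrite coefMn coefXn.
case: (ltnP n i) => hi.
  rewrite bin_small // big1 // => j _.
  have : (i != j) by apply/negP => /eqP e; move: (ltn_ord j); lia.
  by move/negPf => ->; rewrite mul0rn.
rewrite (bigD1 (inord i : 'I_n.+1)) //= inordK; last by lia.
rewrite eqxx mulr1n big1 ?addr0 // => j hj.
case: eqP => [e|_]; last by rewrite mul0rn.
move: hj; rewrite e.
by move/eqP; case; apply/val_inj=> /=; rewrite inordK //; lia.
Qed.


Lemma pchar_poly : p \in [pchar {poly k}].
Proof. exact: (rmorph_pchar (@polyC k)). Qed.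

Lemma frobX (x : {poly k}) e : (x + 1)^+(p^e) = x^+(p^e) + 1.
Proof.
elim: e => [|e IH]; first by rewrite !expr1.
rewrite expnSr !exprM IH.
have h := pFrobenius_autD_comm pchar_poly (commr1 (x ^+ (p ^ e))).
by rewrite !pFrobenius_autE expr1n in h.
Qed.

Lemma lucas e m i : ('C(p^e * m, i)%:R : k) =
  if (p^e %| i)%N then 'C(m, i %/ p^e)%:R else 0.
Proof.
have hq : (0 < p^e)%N by rewrite expn_gt0 p_gt0.
rewrite -coefXaddn exprM frobX.
have -> : ('X^(p^e) + 1 : {poly k}) = ('X + 1) \Po 'X^(p^e).
  by rewrite comp_polyD comp_polyX comp_polyC.
rewrite -rmorphXn /= coef_comp_poly_Xn //.
by case: ifP => // _; rewrite coefXaddn.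
Qed.

End Lucas.


Section Mat.
Variables (k : fieldType) (n : nat).
Local Notation R := 'M[k]_(n.+1).
Local Notation PR := 'M[{poly k}]_(n.+1).

Definition cf (A : PR) (i : nat) : R := map_mx (fun q : {poly k} => q`_i) A.

Lemma eq_cf (A B : PR) : (forall i, cf A i = cf B i) -> A = B.
Proof.
move=> h; apply/matrixP => a b; apply/polyP => i.
by have := congr1 (fun M : R => M a b) (h i); rewrite !mxE.
Qed.

Lemma cfM (X Y : PR) i : cf (X * Y) i = \sum_(u < i.+1) cf X u * cf Y (i - u).
Proof.
apply/matrixP => a b; rewrite mxE summxE -mulmxE.
rewrite mxE coef_sum.
under eq_bigr => c _ do rewrite coefM.
rewrite exchange_big /=; apply: eq_bigr => u _.
by rewrite -mulmxE mxE; apply: eq_bigr => c _; rewrite !mxE.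
Qed.

Lemma cTT' (X Y : PR) a b i j :
  ((map_mx (@polyT k) X *m map_mx (@polyT' k) Y) a b)`_j`_i = (cf X i *m cf Y j) a b.
Proof.
rewrite !mxE coef_sum coef_sum; apply: eq_bigr => c _.
by rewrite !mxE /polyT /polyT' coefCM coef_map /= coefMC.
Qed.

Lemma cT'T (X Y : PR) a b i j :
  ((map_mx (@polyT' k) Y *m map_mx (@polyT k) X) a b)`_j`_i = (cf Y j *m cf X i) a b.
Proof.
rewrite !mxE coef_sum coef_sum; apply: eq_bigr => c _.
by rewrite !mxE /polyT /polyT' coefMC coef_map /= coefCM.
Qed.

Lemma polyTT'E (q : {poly k}) :
  polyTT' q = \sum_(j < size q) (q^`N(j))%:P * 'X^j.
Proof.
rewrite /polyTT' /comp_poly addrC nderiv_taylor; last by exact: mulrC.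
rewrite !size_map_polyC; apply: eq_bigr => j _.
rewrite !nderivn_map horner_map /=.
by rewrite -[(q^`N(j))^:P.['X]]/(q^`N(j) \Po 'X) comp_polyXr.
Qed.

Lemma cTT'E (q : {poly k}) i j : ((polyTT' q)`_j)`_i = q`_(i+j) *+ 'C(i+j, i).
Proof.
have -> : (polyTT' q)`_j = if (j < size q)%N then q^`N(j) else 0.
  rewrite polyTT'E coef_sum.
  under eq_bigr => l _ do rewrite coefCM coefXn.
  case: (ltnP j (size q)) => hj.
    rewrite (bigD1 (Ordinal hj)) //= eqxx mulr1 big1 ?addr0 //.
    move=> l hl; case: eqP => [e|]; last by rewrite mulr0.
    by move: hl; rewrite -e; move/eqP; case; apply/val_inj.
  rewrite big1 // => l _; case: eqP => [e|]; last by rewrite mulr0.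
  by move: (ltn_ord l); rewrite -e; lia.
case: ifP => hj.
  rewrite coef_nderivn addnC -[X in 'C(_, X)](addKn i j) bin_sub //.
  exact: leq_addr.
rewrite coef0 nth_default ?mul0rn //; move/negbT: hj; rewrite -leqNgt => hj; exact: leq_trans hj (leq_addl _ _).
Qed.

Definition exp_coef (a : nat -> R) :=
  a 0%N = 1 /\ forall i j, a i * a j = ('C(i+j, i)%:R : k) *: a (i+j)%N.

Lemma expE (A : PR) : is_exponential A <-> exp_coef (cf A).
Proof.
have h0 : map_mx (fun q : {poly k} => q.[0]) A = cf A 0.
  by apply/matrixP => a b; rewrite !mxE horner_coef0.
rewrite /is_exponential /exp_coef h0; split.
  case=> hM ->; split => // i j.
  apply/matrixP => a b.
  have := congr1 (fun M : 'M[{poly {poly k}}]_(n.+1) => ((M a b)`_j)`_i) hM => /=.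
  by rewrite cTT' mulmxE => ->; rewrite !mxE cTT'E mulr_natl.
case=> h1 hM; split => //.
apply/matrixP => a b; apply/polyP => j; apply/polyP => i.
by rewrite cTT' mulmxE hM !mxE cTT'E mulr_natl.
Qed.


Lemma pT_mul (A B : PR) :
  map_mx (@polyT k) (A * B) = map_mx (@polyT k) A * map_mx (@polyT k) B.
Proof. by rewrite -!mulmxE (map_mxM (@polyC {poly k})). Qed.

Lemma pT'_mul (A B : PR) :
  map_mx (@polyT' k) (A * B) = map_mx (@polyT' k) A * map_mx (@polyT' k) B.
Proof. by rewrite -!mulmxE (map_mxM (map_poly (@polyC k))). Qed.

Lemma pTT'_mul (A B : PR) :
  map_mx (@polyTT' k) (A * B) = map_mx (@polyTT' k) A * map_mx (@polyTT' k) B.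
Proof.
have E (M : PR) : map_mx (@polyTT' k) M =
    map_mx (comp_poly ('X + ('X : {poly k})%:P)) (map_mx (map_poly (@polyC k)) M).
  by rewrite -map_mx_comp.
by rewrite !E -!mulmxE !map_mxM.
Qed.

Lemma cf0M (A B : PR) : cf (A * B) 0 = cf A 0 * cf B 0.
Proof. by rewrite cfM big_ord1. Qed.

Lemma comm_TT' (A B : PR) :
  (forall i j, cf A j * cf B i = cf B i * cf A j) ->
  map_mx (@polyT k) B * map_mx (@polyT' k) A = map_mx (@polyT' k) A * map_mx (@polyT k) B.
Proof.
move=> h; apply/matrixP => a b; apply/polyP => j; apply/polyP => i.
by rewrite -!mulmxE cTT' cT'T !mulmxE h.
Qed.

Lemma expM (A B : PR) : is_exponential A -> is_exponential B ->
  (forall i j, cf A j * cf B i = cf B i * cf A j) -> is_exponential (A * B).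
Proof.
move=> hA hB hc.
have [hA1 hA2] := hA; have [hB1 hB2] := hB.
have h0 (M : PR) : map_mx (fun q : {poly k} => q.[0]) M = cf M 0.
  by apply/matrixP => a b; rewrite !mxE horner_coef0.
split; last by rewrite h0 cf0M -!h0 hA2 hB2 mul1r.
rewrite pT_mul pT'_mul pTT'_mul -hA1 -hB1 -!mulmxE.
rewrite !mulmxE -mulrA [X in _ * X]mulrA comm_TT' //.
by rewrite !mulrA.
Qed.

Lemma cf1 i : cf 1 i = if i == 0%N then 1 else 0.
Proof.
apply/matrixP => a b; rewrite !mxE.
case: (i =P 0%N) => [->|/eqP hi]; rewrite !mxE;
  by case: (a == b); rewrite ?coef1 ?coef0 // (negPf hi).
Qed.

Lemma exp1 : is_exponential (1 : PR).
Proof.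
apply/expE; split; first by rewrite cf1.
move=> i j; rewrite !cf1.
case: (i =P 0%N) => [->|/eqP hi]; case: (j =P 0%N) => [->|/eqP hj] //=.
- by rewrite bin0 scale1r mulr1.
- by rewrite mulr0 scaler0.
- by rewrite mul0r addn0 (negPf hi) scaler0.
- by rewrite mul0r addn_eq0 (negPf hi) scaler0.
Qed.

End Mat.


Section Ex.
Variables (k : fieldType) (p : nat) (n : nat).
Hypothesis hchar : p \in [pchar k].
Local Notation R := 'M[k]_(n.+1).
Local Notation PR := 'M[{poly k}]_(n.+1).

Lemma fact_neq0 d : (d < p)%N -> (d`!%:R : k) != 0.
Proof.
move=> hd; rewrite -(dvdn_pcharf hchar).
elim: d hd => [|d IH] hd; first by rewrite fact0 dvdn1; have := p_gt1 hchar; lia.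
rewrite factS Euclid_dvdM ?(hp hchar) // negb_or IH ?andbT; last by lia.
apply/negP => /dvdn_leq; lia.
Qed.

Lemma expr_nil (N : R) m : N ^+ p = 0 -> (p <= m)%N -> N ^+ m = 0.
Proof. by move=> h hm; rewrite -(subnKC hm) exprD h mul0r. Qed.

Definition ex (N : R) (q i : nat) : R :=
  if (q %| i)%N && (i %/ q < p)%N then ((i %/ q)`!%:R : k)^-1 *: N ^+ (i %/ q) else 0.

Lemma ex_comm (N : R) q a b : ex N q a * ex N q b = ex N q b * ex N q a.
Proof.
rewrite /ex; case: ifP => _; case: ifP => _; rewrite ?mul0r ?mulr0 //.
rewrite -!scalerAl -!scalerAr !scalerA.
rewrite -!exprD addnC; congr (_ *: _); exact: mulrC.
Qed.

Lemma binC i j : 'C(i + j, i) = 'C(i + j, j).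
Proof. by rewrite -[X in 'C(_, X)](addnK j i) bin_sub // leq_addl. Qed.

Lemma ex_CI (N : R) e : N ^+ p = 0 -> exp_coef (ex N (p ^ e)%N).
Proof.
set q := (p ^ e)%N => hN.
have hq : (0 < q)%N by rewrite expn_gt0 (prime_gt0 (hp hchar)).
split.
  by rewrite /ex dvdn0 div0n (prime_gt0 (hp hchar)) fact0 invr1 scale1r expr0.
move=> i j.
have hnd (a b : nat) : ~~ (q %| a)%N -> ex N q a * ex N q b = ('C(a + b, a)%:R : k) *: ex N q (a + b).
  move=> ha; rewrite /ex (negPf ha) /= mul0r.
  case: ifP => [/andP[hab _]|]; last by rewrite scaler0.
  have := divnK hab => <-; rewrite mulnC lucas // (negPf ha) scale0r //.
case hi: (q %| i)%N; last by rewrite hnd ?hi.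
case hj: (q %| j)%N; last first.
  by rewrite binC [(i + j)%N]addnC ex_comm hnd ?hj.
move: hi hj => /dvdnP[a ->] /dvdnP[b ->].
rewrite -mulnDl [X in 'C(X, _)]mulnC lucas // dvdn_mull // mulnK //.
rewrite /ex !dvdn_mull // !mulnK //.
case: (ltnP a p) => ha; case: (ltnP b p) => hb /=; rewrite ?mul0r ?mulr0.
2-4: by case: ifP => h; [lia | rewrite scaler0].
rewrite -scalerAl -scalerAr scalerA -exprD.
case: (ltnP (a + b) p) => hab /=; last by rewrite (expr_nil hN hab) !scaler0.
rewrite scalerA; congr (_ *: _).
have := bin_fact (leq_addr b a); rewrite addKn => hf.
have hfk : ('C(a + b, a)%:R * (a`!%:R * b`!%:R) : k) = (a + b)`!%:R.
  by rewrite -!natrM hf.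
have h1 := fact_neq0 ha; have h2 := fact_neq0 hb; have h3 := fact_neq0 hab.
have hC : ('C(a + b, a)%:R : k) != 0.
  by apply/negP => /eqP h; move: h3; rewrite -hfk h !mul0r eqxx.
rewrite -hfk !invfM.
by rewrite [RHS]mulrA divff // mul1r.
Qed.


Definition mkP (c : nat -> R) (L : nat) : PR := \matrix_(a, b) \poly_(i < L) c i a b.

Lemma cf_mkP c L i : cf (mkP c L) i = if (i < L)%N then c i else 0.
Proof.
apply/matrixP => a b; rewrite !mxE coef_poly.
by case: ifP => _; rewrite ?mxE.
Qed.

Definition Em (N : R) (q : nat) : PR := mkP (ex N q) (p * q)%N.

Lemma cf_Em N q i : (0 < q)%N -> cf (Em N q) i = ex N q i.
Proof.
move=> hq; rewrite cf_mkP; case: ifP => // h.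
rewrite /ex; case: ifP => // /andP[_]; by rewrite ltn_divLR // h.
Qed.

Lemma exp_coef_ext (a b : nat -> R) : (forall i, a i = b i) -> exp_coef a -> exp_coef b.
Proof. by move=> h [h0 h1]; split; [rewrite -h | move=> i j; rewrite -!h]. Qed.

Lemma exp_Em N e : N ^+ p = 0 -> is_exponential (Em N (p ^ e)%N).
Proof.
move=> hN; apply/expE; apply: (exp_coef_ext _ (ex_CI e hN)) => i.
by rewrite cf_Em // expn_gt0 (prime_gt0 (hp hchar)).
Qed.

Definition cmt (X : PR) (Z : R) := forall i, GRing.comm (cf X i) Z.

Lemma cmt_mul X Y Z : cmt X Z -> cmt Y Z -> cmt (X * Y) Z.
Proof.
move=> hX hY i; rewrite cfM; apply: commr_sym; apply: commr_sum => u _.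
by apply: commrM; apply: commr_sym.
Qed.

Lemma cmt_1 Z : cmt 1 Z.
Proof. by move=> i; rewrite cf1; case: ifP => _; [exact: commr_sym (commr1 _) | exact: commr_sym (commr0 _)]. Qed.

Lemma comm_ex x N q i : GRing.comm x N -> GRing.comm x (ex N q i).
Proof.
move=> h; rewrite /ex; case: ifP => _; last exact: commr0.
rewrite /GRing.comm -scalerAl -scalerAr; congr (_ *: _); exact: commrX.
Qed.

Lemma cmt_Em N q Z : (0 < q)%N -> GRing.comm N Z -> cmt (Em N q) Z.
Proof. by move=> hq h i; rewrite cf_Em //; apply/commr_sym/comm_ex/commr_sym. Qed.

Definition Pr (r : nat) (N : nat -> R) : PR := \prod_(e < r) Em (N e) (p ^ e)%N.

Lemma cmt_Pr r N Z : (forall e, GRing.comm (N e) Z) -> cmt (Pr r N) Z.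
Proof.
move=> h; rewrite /Pr; apply: (big_ind (fun X => cmt X Z)); first exact: cmt_1.
  by move=> X Y; apply: cmt_mul.
by move=> e _; apply: cmt_Em => //; rewrite expn_gt0 (prime_gt0 (hp hchar)).
Qed.

Lemma exp_Pr r N : (forall a b, GRing.comm (N a) (N b)) -> (forall a, N a ^+ p = 0) ->
  is_exponential (Pr r N).
Proof.
move=> hc hN; elim: r => [|r IH]; first by rewrite /Pr big_ord0; exact: exp1.
rewrite /Pr big_ord_recr /=; apply: expM => //; first exact: exp_Em.
move=> i j; have hq : (0 < p ^ r)%N by rewrite expn_gt0 (prime_gt0 (hp hchar)).
rewrite cf_Em //; apply: comm_ex.
by have h := @cmt_Pr r N (N r) (fun e => hc e r) j.
Qed.


Lemma pgt0 : (0 < p)%N. Proof. exact: prime_gt0 (hp hchar). Qed.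
Lemma pqgt0 e : (0 < p ^ e)%N. Proof. by rewrite expn_gt0 pgt0. Qed.

Lemma ex0 N q : (0 < q)%N -> ex N q 0 = 1.
Proof. by move=> hq; rewrite /ex dvdn0 div0n pgt0 fact0 invr1 scale1r expr0. Qed.

Lemma cf0_Pr r N : cf (Pr r N) 0 = 1.
Proof.
rewrite /Pr; apply: (big_ind (fun X => cf X 0 = 1)).
- by rewrite cf1.
- by move=> X Y hX hY; rewrite cf0M hX hY mulr1.
- by move=> e _; rewrite cf_Em ?pqgt0 // ex0 // pqgt0.
Qed.

Lemma cf_comp (X : PR) i :
  cf (map_mx (comp_poly ('X^p : {poly k})) X) i = if (p %| i)%N then cf X (i %/ p) else 0.
Proof.
apply/matrixP => a b; rewrite !mxE coef_comp_poly_Xn ?pgt0 //.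
by case: ifP => _; rewrite !mxE.
Qed.

Lemma Em_comp N q : (0 < q)%N ->
  map_mx (comp_poly ('X^p : {poly k})) (Em N q) = Em N (p * q)%N.
Proof.
move=> hq; have hpq : (0 < p * q)%N by rewrite muln_gt0 pgt0.
apply: eq_cf => i; rewrite cf_comp (cf_Em _ _ hpq) (cf_Em _ _ hq).
case: ifP => hpi.
  case/dvdnP: hpi => t ht; subst i.
  by rewrite mulnK ?pgt0 // /ex [(t * p)%N]mulnC dvdn_pmul2l ?pgt0 // divnMl ?pgt0.
rewrite /ex; case: ifP => [/andP[h _]|] //.
by move: hpi; rewrite (dvdn_trans (dvdn_mulr q (dvdnn p)) h).
Qed.

Lemma Pr_shift r N :
  Pr r.+1 N = Em (N 0%N) 1 * map_mx (comp_poly ('X^p : {poly k})) (Pr r (fun e => N e.+1)).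
Proof.
rewrite /Pr big_ord_recl expn0 rmorph_prod; congr (_ * _).
apply: eq_bigr => e _.
by rewrite [RHS]/= Em_comp ?pqgt0 // -expnS.
Qed.

Lemma cf_mulcomp (M Q : PR) m d : (d < p)%N -> (forall i, (p <= i)%N -> cf M i = 0) ->
  cf (M * map_mx (comp_poly ('X^p : {poly k})) Q) (p * m + d)%N = cf M d * cf Q m.
Proof.
move=> hd hM; rewrite cfM.
have hdi : (d < (p * m + d).+1)%N by lia.
rewrite (bigD1 (Ordinal hdi)) //= big1 ?addr0.
  by rewrite cf_comp addnK dvdn_mulr // mulKn ?pgt0.
move=> u hu; case: (leqP p u) => hup; first by rewrite hM // mul0r.
rewrite cf_comp; case: ifP => [hdv|]; last by rewrite mulr0.
exfalso; move: hu => /eqP hu; apply: hu; apply: val_inj => /=.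
have hu' := ltn_ord u.
move: (nat_of_ord u) hup hu' hdv => v hup hu' hdv; clear u; rename v into u.
case: (leqP u d) => hud.
  move: hdv; rewrite -addnBA // dvdn_addr ?dvdn_mulr //.
  case hz: (d - u)%N => [|z]; first by lia.
  by move/dvdn_leq => /(_ isT); lia.
case: m hu' hdv {hdi} => [|m] hu'; first by lia.
have -> : (p * m.+1 + d - u = p * m + (p + d - u))%N by rewrite mulnS; lia.
rewrite dvdn_addr ?dvdn_mulr //.
case hz: (p + d - u)%N => [|z]; first by lia.
by move/dvdn_leq => /(_ isT); lia.
Qed.

Lemma cf_Pr r N e : cf (Pr r N) (p ^ e)%N = if (e < r)%N then N e else 0.
Proof.
elim: r N e => [|r IH] N e.
  rewrite /Pr big_ord0 cf1; case: eqP => // h.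
  by have := pqgt0 e; rewrite h.
have hM : forall i, (p <= i)%N -> cf (Em (N 0%N) 1) i = 0.
  move=> i hi; rewrite cf_Em // /ex divn1 ltnNge hi andbF //.
rewrite Pr_shift; case: e => [|e].
  rewrite (_ : (p ^ 0 = p * 0 + 1)%N); last by rewrite muln0.
  rewrite cf_mulcomp //; last exact: p_gt1 hchar.
  by rewrite cf0_Pr mulr1 cf_Em // /ex dvdn1 divn1 (p_gt1 hchar) (_ : 1`! = 1)%N // invr1 scale1r expr1.
rewrite expnS -[(p * p ^ e)%N]addn0 cf_mulcomp ?pgt0 // IH.
by rewrite cf_Em // ex0 // mul1r.
Qed.

End Ex.


Section Struct.
Variables (k : fieldType) (p : nat) (n : nat).
Hypothesis hchar : p \in [pchar k].
Local Notation R := 'M[k]_(n.+1).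
Local Notation PR := 'M[{poly k}]_(n.+1).

Lemma ci_comm (a : nat -> R) : exp_coef a -> forall i j, GRing.comm (a i) (a j).
Proof.
by case=> _ h i j; rewrite /GRing.comm !h addnC binC.
Qed.

Lemma ci_pow (a : nat -> R) e d : exp_coef a ->
  a (p ^ e)%N ^+ d = (d`!%:R : k) *: a (d * p ^ e)%N.
Proof.
have hq := pqgt0 hchar e.
case=> h0 h; elim: d => [|d IH]; first by rewrite expr0 mul0n h0 fact0 scale1r.
rewrite exprSr IH -scalerAl h scalerA -mulSnr.
rewrite [X in 'C(X, _)]mulnC lucas // dvdn_mull // mulnK //.
by rewrite binSn factS natrM mulrC.
Qed.

Lemma ci_nil (a : nat -> R) e : exp_coef a -> a (p ^ e)%N ^+ p = 0.
Proof.
move=> h; rewrite ci_pow //.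
have /eqP -> : (p`!%:R : k) == 0.
  by rewrite -(dvdn_pcharf hchar) dvdn_fact // prime_gt0 ?(hp hchar) /=.
by rewrite scale0r.
Qed.

Lemma ci_uniq (a b : nat -> R) : exp_coef a -> exp_coef b ->
  (forall e, a (p ^ e)%N = b (p ^ e)%N) -> forall i, a i = b i.
Proof.
move=> ha hb he; elim/ltn_ind => i IH.
case: (posnP i) => [->|hi]; first by rewrite ha.1 hb.1.
have [m hcop hm] := pfactor_coprime (hp hchar) hi.
move: (logn p i) hm => e hm.
have hm0 : (0 < m)%N by move: hi; rewrite hm muln_gt0 => /andP[].
case: (ltnP 1 m) => hm1; last first.
  have hm1' : m = 1%N by lia.
  by rewrite hm hm1' mul1n he.
have hq := pqgt0 hchar e.
have hsplit : i = (p ^ e + (m.-1 * p ^ e))%N by rewrite hm -mulSn prednK.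
have hC : ('C(i, p ^ e)%:R : k) = m%:R.
  by rewrite hm mulnC lucas // dvdnn divnn hq bin1.
have hm0k : (m%:R : k) != 0.
  by rewrite -(dvdn_pcharf hchar) -prime_coprime ?(hp hchar).
have key (c : nat -> R) : exp_coef c ->
    c i = (m%:R : k)^-1 *: (c (p ^ e)%N * c (m.-1 * p ^ e)%N).
  move=> [_ hc]; rewrite hc -hsplit hC scalerA mulVf // scale1r //.
rewrite (key a ha) (key b hb) he IH //.
rewrite hsplit; move: hq; set x := (p ^ e)%N; set y := (m.-1 * x)%N; lia.
Qed.


Definition Bd (A : PR) := (\max_(ab : 'I_n.+1 * 'I_n.+1) size (A ab.1 ab.2))%N.

Lemma cf_big (A : PR) i : (Bd A <= i)%N -> cf A i = 0.
Proof.
move=> h; apply/matrixP => a b; rewrite !mxE nth_default //.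
apply: leq_trans h; exact: (leq_bigmax (a, b)).
Qed.

Definition sA (A : PR) := (\max_(e < Bd A | cf A (p ^ e)%N != 0%R) e.+1)%N.

Lemma sA_zero (A : PR) e : (sA A <= e)%N -> cf A (p ^ e)%N = 0.
Proof.
move=> h; case: (ltnP e (Bd A)) => he.
  apply/eqP; apply: contraTT h => hne; rewrite -ltnNge.
  exact: (leq_bigmax_cond (Ordinal he) hne).
apply: cf_big; apply: leq_trans he _; apply: ltnW; exact: ltn_expl (p_gt1 hchar).
Qed.

Lemma sA_le (A : PR) r : (forall e, (r <= e)%N -> cf A (p ^ e)%N = 0) -> (sA A <= r)%N.
Proof.
move=> h; apply/bigmax_leqP => e he; rewrite ltnNge; apply/negP => hre.
by move: he; rewrite h ?eqxx.
Qed.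

End Struct.


Section Hom.
Variables (k : fieldType) (p : nat) (n : nat).
Hypothesis hchar : p \in [pchar k].
Local Notation R := 'M[k]_(n.+1).

Lemma pcharR : p \in [pchar R].
Proof. exact: (rmorph_pchar (@scalar_mx k n.+1)). Qed.

Lemma frob1 (N : R) : (1 + N) ^+ p = 1 + N ^+ p.
Proof.
have h := pFrobenius_autD_comm pcharR (commr_sym (commr1 N)).
by rewrite !pFrobenius_autE expr1n in h.
Qed.

Lemma frobB1 (U : R) : (U - 1) ^+ p = U ^+ p - 1.
Proof.
have h := pFrobenius_autB_comm pcharR (commr1 U).
by rewrite !pFrobenius_autE expr1n in h.
Qed.

Lemma prod_split_comm r (F G : 'I_r -> R) :
  (forall i j, GRing.comm (F i) (G j)) ->
  \prod_(i < r) (F i * G i) = (\prod_(i < r) F i) * \prod_(i < r) G i.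
Proof.
elim: r F G => [|r IH] F G h; first by rewrite !big_ord0 mulr1.
rewrite !big_ord_recr /= IH; last by move=> i j; apply: h.
rewrite -!mulrA; congr (_ * _); rewrite !mulrA; congr (_ * _).
apply/esym; apply: commr_prod => i _; exact: h.
Qed.

Variable r : nat.
Local Notation Z := (Zp_pow p r).

Definition eZ (i : 'I_r) : Z := [ffun j => (j == i)%:R].

Lemma Zp_val1 (b : bool) : nat_of_ord ((b%:R : 'Z_p)) = b.
Proof. by case: b => //=; rewrite modn_small. Qed.

Lemma Z_decomp (x : Z) : x = \sum_(i < r) eZ i *+ (x i).
Proof.
apply/ffunP => j; rewrite sum_ffunE (bigD1 j) //= big1 ?addr0.
  by rewrite ffunMnE ffunE eqxx natr_Zp.
by move=> i hi; rewrite ffunMnE ffunE eq_sym (negPf hi) mul0rn.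
Qed.

Section F.
Variable f : {ffun Z -> R}.
Hypothesis hf : is_hom_GL f.

Lemma homD x y : f (x + y) = f x * f y.
Proof. by rewrite hf.2 mulmxE. Qed.

Lemma homU x : f x \is a GRing.unit.
Proof. exact: hf.1. Qed.

Lemma hom0 : f 0 = 1.
Proof.
have hu := homU.
have h := homD 0 0; rewrite addr0 in h.
by apply: (mulrI (hu 0)); rewrite mulr1 -h.
Qed.

Lemma homMn x m : f (x *+ m) = f x ^+ m.
Proof.
elim: m => [|m IH]; first by rewrite mulr0n expr0 hom0.
by rewrite mulrS homD IH exprS.
Qed.

Lemma homsum (g : 'I_r -> Z) : f (\sum_(i < r) g i) = \prod_(i < r) f (g i).
Proof. exact: (big_morph f homD hom0). Qed.

Lemma hom_decomp x : f x = \prod_(i < r) f (eZ i) ^+ (x i).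
Proof.
rewrite {1}(Z_decomp x) homsum; apply: eq_bigr => i _; exact: homMn.
Qed.

Lemma hom_comm x y : GRing.comm (f x) (f y).
Proof. by rewrite /GRing.comm -!homD addrC. Qed.

Lemma hom_p i : f (eZ i) ^+ p = 1.
Proof.
rewrite -homMn -hom0; congr (f _); apply/ffunP => j.
have hp0 : (p%:R : 'Z_p) = 0 by exact: pchar_Zp (p_gt1 hchar).
by rewrite ffunMnE ffunE -[_ *+ p]mulr_natr hp0 mulr0 ffunE.
Qed.

Definition Nf (e : nat) : R := if (insub e : option 'I_r) is Some i then f (eZ i) - 1 else 0.

Lemma Nf_val (i : 'I_r) : Nf i = f (eZ i) - 1.
Proof. by rewrite /Nf valK. Qed.

Lemma Nf_comm a b : GRing.comm (Nf a) (Nf b).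
Proof.
rewrite /Nf; case: insub => [i|]; case: insub => [j|];
  rewrite /GRing.comm ?mulr0 ?mul0r //.
by apply: commrB; [apply: commr_sym; apply: commrB; [exact: hom_comm | exact: commr1] | exact: commr1].
Qed.

Lemma Nf_nil a : Nf a ^+ p = 0.
Proof.
rewrite /Nf; case: insub => [i|]; last by rewrite expr0n; case: p (p_gt1 hchar).
by rewrite frobB1 hom_p subrr.
Qed.
End F.

Section G.
Variable N : nat -> R.
Hypothesis hc : forall a b, GRing.comm (N a) (N b).
Hypothesis hn : forall a, N a ^+ p = 0.

Definition gfun : {ffun Z -> R} := [ffun x : Z => \prod_(i < r) (1 + N i) ^+ (x i)].

Lemma U_p a : (1 + N a) ^+ p = 1.
Proof. by rewrite frob1 hn addr0. Qed.

Lemma U_unit a : (1 + N a) \is a GRing.unit.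
Proof.
have hp1 := p_gt1 hchar.
apply/unitrP; exists ((1 + N a) ^+ p.-1).
by rewrite -exprS -exprSr prednK ?U_p //; lia.
Qed.

Lemma U_comm a b : GRing.comm (1 + N a) (1 + N b).
Proof.
apply: commrD; first exact: commr1.
apply: commr_sym; apply: commrD; [exact: commr1 | exact: hc].
Qed.

Lemma Zp_addv (a b : 'Z_p) : nat_of_ord (a + b) = ((a + b) %% p)%N.
Proof. have e := Zp_cast (p_gt1 hchar); rewrite -[X in (_ %% X)%N]e; reflexivity. Qed.

Lemma gfun_hom : is_hom_GL gfun.
Proof.
split.
  move=> x; rewrite ffunE; apply: (big_ind (fun M : R => M \is a GRing.unit)).
  - exact: unitr1.
  - by move=> A B hA hB; rewrite unitrMl.
  - by move=> i _; apply: unitrX; exact: U_unit.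
move=> x y; rewrite mulmxE !ffunE -prod_split_comm; last first.
  by move=> i j; apply: commrX; apply: commr_sym; apply: commrX; exact: U_comm.
apply: eq_bigr => i _; rewrite ?ffunE Zp_addv expr_mod ?U_p // exprD //.
Qed.

Lemma gfun_e (i : 'I_r) : gfun (eZ i) = 1 + N i.
Proof.
rewrite /gfun ffunE.
rewrite (eq_bigr (fun j => if j == i then 1 + N i else 1)).
  by rewrite -big_mkcond big_pred1_eq.
move=> j _; rewrite ffunE Zp_val1; case: eqP => [->|_]; by rewrite ?expr1 ?expr0.
Qed.
End G.
End Hom.


Section Main.
Variables (k : fieldType) (p n : nat).
Hypothesis hchar : p \in [pchar k].
Local Notation R := 'M[k]_(n.+1).
Local Notation PR := 'M[{poly k}]_(n.+1).

Definition HomS := {r : nat & {f : {ffun Zp_pow p r -> 'M[k]_n.+1} | is_hom_GL f}}.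
Definition ExpS := ({A : 'M[{poly k}]_n.+1 | is_exponential A} * nat)%type.

Lemma exp_of_hom r (f : {ffun Zp_pow p r -> R}) (hf : is_hom_GL f) :
  is_exponential (Pr p r (Nf f)).
Proof. exact: (exp_Pr hchar r (Nf_comm hf) (Nf_nil hchar hf)). Qed.

Definition Fmap (h : HomS) : ExpS :=
  let: existT r (exist f hf) := h in
  (exist _ (Pr p r (Nf f)) (exp_of_hom hf), (r - sA p (Pr p r (Nf f)))%N).

Definition cN (A : PR) (e : nat) : R := cf A (p ^ e)%N.

Lemma cN_comm (A : PR) : is_exponential A -> forall a b, GRing.comm (cN A a) (cN A b).
Proof. by move=> /expE h a b; exact: (ci_comm h). Qed.

Lemma cN_nil (A : PR) : is_exponential A -> forall a, cN A a ^+ p = 0.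
Proof. by move=> /expE h a; exact: (ci_nil hchar a h). Qed.

Definition mkHom r (A : PR) (hA : is_exponential A) : HomS :=
  existT _ r (exist _ (gfun p r (cN A)) (gfun_hom hchar r (cN_comm hA) (cN_nil hA))).

Lemma mkHom_eq r1 r2 A hA : r1 = r2 -> mkHom r1 hA = mkHom r2 (A := A) hA.
Proof. by move->. Qed.

Definition Gmap (x : ExpS) : HomS :=
  mkHom (sA p (sval x.1) + x.2)%N (proj2_sig x.1).

Lemma FG : cancel Fmap Gmap.
Proof.
move=> [r [f hf]] /=; rewrite /Gmap /=.
set A := Pr p r (Nf f).
have hs : (sA p A <= r)%N.
  by apply: sA_le => e he; rewrite /A cf_Pr // ltnNge he.
rewrite (mkHom_eq _ (subnKC hs)) /mkHom.
have E : gfun p r (cN A) = f.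
  apply/ffunP => x; rewrite ffunE (hom_decomp hf x); apply: eq_bigr => i _.
  by rewrite /cN /A cf_Pr // ltn_ord Nf_val addrC subrK.
move: (gfun_hom _ _ _ _); rewrite E => pf.
by rewrite (proof_irrelevance _ pf hf).
Qed.

Lemma GF : cancel Gmap Fmap.
Proof.
move=> [[A hA] m]; rewrite /Gmap /mkHom /=.
set r := (sA p A + m)%N.
set g := gfun p r (cN A).
have hg := gfun_hom hchar r (cN_comm hA) (cN_nil hA).
have E : Pr p r (Nf g) = A.
  apply: eq_cf => i; apply: (ci_uniq hchar); first by apply/expE; exact: exp_of_hom hg.
    by apply/expE.
  move=> e; rewrite cf_Pr //; case: ltnP => he.
    by rewrite -[e]/(nat_of_ord (Ordinal he)) Nf_val gfun_e addrC addKr.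
  by rewrite sA_zero // (leq_trans _ he) // leq_addr.
move: (exp_of_hom _); rewrite E => pf.
rewrite (proof_irrelevance _ pf hA); congr (_, _).
by rewrite /r addKn.
Qed.

Lemma main_bij : exists F : HomS -> ExpS, bijective F.
Proof. exists Fmap; exists Gmap; [exact: FG | exact: GF]. Qed.

End Main.

Unset Implicit Arguments.

Theorem theorem0p2 (k : closedFieldType) (p n : nat) (hp : prime p)
  (hchar : p \in [pchar k]) (hn : (1 <= n)%N) :
  exists F : {r : nat & {f : {ffun Zp_pow p r -> 'M[k]_n} | is_hom_GL f}} ->
             ({A : 'M[{poly k}]_n | is_exponential A} * nat)%type,
    bijective F.
Proof.
case: n hn => [//|n] _.
exact: (main_bij n hchar).
Qed.
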